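(* In the Shepp--Olkin setting with $p_i'\ge0$ for all $i$ and $v=\sum_ip_i'>0$, fix $t$ with $f_k(t)>0$ for all $k$, and let $\alpha_k=\frac{\sum_ip_i'p_i(t)f_{k-1}^{(i)}(t)}{vf_k(t)}$. Then for all $k=0,\ldots,n-2$, $$\alpha_{k+1}(1-\alpha_{k+1})f_{k+1}^2-\alpha_{k+2}(1-\alpha_k)f_kf_{k+2}\ge0$$ (all evaluated at $t$).
   Context: Shepp--Olkin setting: $p_1,\ldots,p_n:[0,1]\to[0,1]$ are affine functions with constant derivatives $p_i'$. $f_k(t)$, $k=0,\ldots,n$, is the probability mass function of a sum of independent Bernoulli variables with parameters $p_1(t),\ldots,p_n(t)$; $f^{(i)}_k(t)$ is the mass function of the sum omitting the $i$-th variable (extended by $0$ outside $\{0,\ldots,n-1\}$). *)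

(* Defs.v *)
From HB Require Import structures.
From mathcomp Require Import all_boot all_order all_algebra.
Set Implicit Arguments. Unset Strict Implicit. Unset Printing Implicit Defensive.
Import Order.TTheory GRing.Theory Num.Theory.
Local Open Scope ring_scope.

(* pmf of the sum of independent Bernoulli(q i), i < n, at value k:
   sum over the sets S of indices of successes with #|S| = k. *)
Definition bern_pmf (R : realFieldType) (n : nat) (q : 'I_n -> R) (k : nat) : R :=
  \sum_(S : {set 'I_n} | #|S| == k)
     (\prod_(j in S) q j) * (\prod_(j in ~: S) (1 - q j)).

Definition bern_pmf_omit (R : realFieldType) (n : nat) (q : 'I_n -> R)
    (i : 'I_n) (k : nat) : R :=
  \sum_(S : {set 'I_n} | (i \notin S) && (#|S| == k))
     (\prod_(j in S) q j) * (\prod_(j in (~: S) :\ i) (1 - q j)).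

(* f^{(i)}_{k-1}, extended by 0 at index -1 (i.e. when k = 0). *)
Definition bern_pmf_omit_pred (R : realFieldType) (n : nat) (q : 'I_n -> R)
    (i : 'I_n) (k : nat) : R :=
  if k is k'.+1 then bern_pmf_omit q i k' else 0.

Definition so_alpha (R : realFieldType) (n : nat) (dp q : 'I_n -> R) (k : nat) : R :=
  (\sum_(i < n) dp i * q i * bern_pmf_omit_pred q i k) /
  ((\sum_(i < n) dp i) * bern_pmf q k).

(* Main.v *)
Require Import Defs.
From HB Require Import structures.
From mathcomp Require Import all_boot all_order all_algebra.
Import Order.TTheory GRing.Theory Num.Theory.
Local Open Scope ring_scope.
From mathcomp Require Import ring lra.
Set Implicit Arguments. Unset Strict Implicit.

Definition predF (R : realFieldType) (F : nat -> R) (k : nat) : R :=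
  if k is k'.+1 then F k' else 0.

Definition pmfA (R : realFieldType) (n : nat) (q : 'I_n -> R) (A : {set 'I_n}) (k : nat) : R :=
  \sum_(S : {set 'I_n} | (S \subset A) && (#|S| == k))
     (\prod_(j in S) q j) * (\prod_(j in A :\: S) (1 - q j)).

Section S.
Variables (R : realFieldType) (n : nat) (q : 'I_n -> R).
Hypothesis hq : forall j, 0 <= q j <= 1.

Lemma pmfA_ge0 (A : {set 'I_n}) k : 0 <= pmfA q A k.
Proof.
apply: sumr_ge0 => S _; apply: mulr_ge0; apply: prodr_ge0 => j _;
  have /andP[h1 h2] := hq j; lra.
Qed.

Lemma pmfA_big (A : {set 'I_n}) k : (#|A| < k)%N -> pmfA q A k = 0.
Proof.
move=> hk; apply: big1 => S /andP[/subset_leq_card hS /eqP hSk].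
by move: hk; rewrite -hSk ltnNge hS.
Qed.

Lemma pmfA_rem (A : {set 'I_n}) i k : i \in A ->
  pmfA q A k = q i * predF (pmfA q (A :\ i)) k + (1 - q i) * pmfA q (A :\ i) k.
Proof.
move=> iA; rewrite /pmfA (bigID (fun S : {set 'I_n} => i \in S)) /=; congr (_ + _).
  rewrite (reindex_onto (fun T => i |: T) (fun S => S :\ i)) /=; last first.
    by move=> S /andP[_ iS]; rewrite setD1K.
  have eqP' : forall T : {set 'I_n},
     ((i |: T \subset A) && (#|i |: T| == k) && (i \in i |: T) && ((i |: T) :\ i == T))
     = (T \subset A :\ i) && (#|T|.+1 == k).
    move=> T; case iT: (i \in T).
      have -> : ((i |: T) :\ i == T) = false.
        apply/negbTE/eqP => h; have : i \in (i |: T) :\ i by rewrite h.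
        by rewrite !inE eqxx.
      by rewrite subsetD1 iT !andbF.
    rewrite setU1K ?iT // eqxx cardsU1 iT setU11 subsetD1 iT subUset sub1set iA.
    by rewrite !andbT.
  rewrite (eq_bigl _ _ eqP') {eqP'}.
  case: k => [|k] /=.
    by rewrite big_pred0 ?mulr0 // => T; rewrite andbF.
  rewrite mulr_sumr; apply: eq_big => [T|T /andP[hT _]]; first by rewrite eqSS.
  move: hT; rewrite subsetD1 => /andP[_ iT].
  rewrite big_setU1 //= -mulrA; congr (_ * (_ * _)).
  by apply: eq_bigl => j; rewrite !inE; case: (j == i); case: (j \in T); case: (j \in A).
rewrite mulr_sumr; apply: eq_big => [S|S /andP[_ iS]].
  by rewrite subsetD1; case: (S \subset A); case: (i \in S); case: (#|S| == k).
rewrite [\prod_(j in A :\: S) _](bigD1 i) /=; last by rewrite !inE iS iA.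
rewrite mulrCA; congr (_ * (_ * _)).
by apply: eq_bigl => j; rewrite !inE; case: (j == i); case: (j \in S); case: (j \in A).
Qed.
End S.
Section LCs.
Variable R : realFieldType.

Definition LC (F : nat -> R) :=
  (forall k, 0 <= F k) /\
  (forall i j, (i <= j)%N -> F i * F j.+2 <= F i.+1 * F j.+1).

Lemma LC_ext F G : F =1 G -> LC G -> LC F.
Proof. by move=> e [h1 h2]; split=> [k|i j hij]; rewrite !e //; apply: h2. Qed.

Lemma LC_step F p : 0 <= p <= 1 -> LC F ->
  LC (fun k => p * predF F k + (1 - p) * F k).
Proof.
move=> /andP[p0 p1] [F0 L]; have q0 : 0 <= 1 - p by lra.
split=> [[|k]|i j hij] /=; rewrite /predF.
- by rewrite mulr0 add0r mulr_ge0.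
- by rewrite addr_ge0 // mulr_ge0.
case: i hij => [|i] hij.
  have h := L 0%N j (leq0n j).
  rewrite -subr_ge0.
  have -> : (p * F 0%N + (1 - p) * F 1%N) * (p * F j + (1 - p) * F j.+1) -
     (p * 0 + (1 - p) * F 0%N) * (p * F j.+1 + (1 - p) * F j.+2) =
     p * p * (F 0%N * F j) + p * (1 - p) * (F 1%N * F j) +
     (1 - p) * (1 - p) * (F 1%N * F j.+1 - F 0%N * F j.+2) by ring.
  rewrite -subr_ge0 in h.
  by rewrite !addr_ge0 // !mulr_ge0.
case: j hij => [|j] // hij.
have h1 := L i j hij.
have h2 := L i.+1 j.+1 hij.
have h3 := L i j.+1 (leqW hij).
have h4 : F i.+1 * F j.+2 <= F i.+2 * F j.+1.
  move: hij; rewrite leq_eqVlt => /orP[/eqP->|hlt]; first by rewrite mulrC.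
  exact: L.
rewrite -subr_ge0.
have -> : (p * F i.+1 + (1 - p) * F i.+2) * (p * F j.+1 + (1 - p) * F j.+2) -
   (p * F i + (1 - p) * F i.+1) * (p * F j.+2 + (1 - p) * F j.+3) =
   p * p * (F i.+1 * F j.+1 - F i * F j.+2) +
   (1 - p) * (1 - p) * (F i.+2 * F j.+2 - F i.+1 * F j.+3) +
   p * (1 - p) * (F i.+2 * F j.+1 - F i * F j.+3) by ring.
rewrite -subr_ge0 in h1; rewrite -subr_ge0 in h2.
have h5 : 0 <= F i.+2 * F j.+1 - F i * F j.+3 by rewrite subr_ge0; exact: le_trans h3 h4.
by rewrite !addr_ge0 // !mulr_ge0.
Qed.
End LCs.

Lemma pmfA_LC (R : realFieldType) (n : nat) (q : 'I_n -> R) :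
  (forall j, 0 <= q j <= 1) -> forall A : {set 'I_n}, LC (pmfA q A).
Proof.
move=> hq.
suff : forall m (A : {set 'I_n}), #|A| = m -> LC (pmfA q A) by move=> H A; exact: H.
elim=> [|m IH] A hA.
  split=> [k|i j _]; first exact: pmfA_ge0.
  rewrite (@pmfA_big _ _ q A j.+2) ?hA // mulr0 mulr_ge0 //; exact: pmfA_ge0.
have : (0 < #|A|)%N by rewrite hA.
case/card_gt0P => i iA.
have hA' : #|A :\ i| = m by move: hA; rewrite (cardsD1 i) iA add1n => -[].
apply: (LC_ext (fun k => @pmfA_rem R n q A i k iA)).
exact: LC_step (hq i) (IH _ hA').
Qed.

Lemma bern_pmfE (R : realFieldType) n (q : 'I_n -> R) k :
  bern_pmf q k = pmfA q setT k.
Proof.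
apply: eq_big => [S|S _]; first by rewrite subsetT.
by rewrite setTD.
Qed.

Lemma bern_pmf_omitE (R : realFieldType) n (q : 'I_n -> R) i k :
  bern_pmf_omit q i k = pmfA q (~: [set i]) k.
Proof.
apply: eq_big => [S|S _]; first by rewrite subsetC sub1set inE.
congr (_ * _); apply: eq_bigl => j; rewrite !inE.
by case: (j == i); case: (j \in S).
Qed.

Lemma dbl (R : realFieldType) n (x y z w : 'I_n -> R) :
  (\sum_(i < n) x i) * (\sum_(j < n) y j) - (\sum_(i < n) z i) * (\sum_(j < n) w j)
  = \sum_(i < n) \sum_(j < n) (x i * y j - z i * w j).
Proof.
rewrite !mulr_suml -sumrB; apply: eq_bigr => i _.
by rewrite !mulr_sumr -sumrB.
Qed.

Lemma alg_id :  forall (R : realFieldType) (bi bj pi pj x y z : R),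
  bi * pi * (pj * x + (1 - pj) * y) *
  (bj * (1 - pj) * (pi * y + (1 - pi) * z)) -
  bi * pi * (pj * y + (1 - pj) * z) *
  (bj * (1 - pj) * (pi * x + (1 - pi) * y)) +
  (bj * pj * (pi * x + (1 - pi) * y) *
   (bi * (1 - pi) * (pj * y + (1 - pj) * z)) -
   bj * pj * (pi * y + (1 - pi) * z) *
   (bi * (1 - pi) * (pj * x + (1 - pj) * y))) =
  bi * bj * (pi - pj) ^+ 2 * (y ^+ 2 - x * z).
Proof. by move=> *; ring. Qed.

Unset Implicit Arguments. Set Strict Implicit.

Theorem proposition5p4 (R : realFieldType) (n : nat) (a b : 'I_n -> R)
  (hrange : forall (i : 'I_n) (s : R), 0 <= s <= 1 -> 0 <= a i + b i * s <= 1)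
  (hder : forall i : 'I_n, 0 <= b i)
  (hv : 0 < \sum_(i < n) b i)
  (t : R) (ht : 0 <= t <= 1)
  (hf : forall k : nat, (k <= n)%N -> 0 < bern_pmf (fun i => a i + b i * t) k) :
  let p := fun i : 'I_n => a i + b i * t in
  let f := bern_pmf p in
  let alpha := so_alpha b p in
  forall k : nat, (k.+2 <= n)%N ->
    0 <= alpha k.+1 * (1 - alpha k.+1) * f k.+1 ^+ 2
         - alpha k.+2 * (1 - alpha k) * f k * f k.+2.
Proof.
move=> p f alpha k hk.
have hp : forall i, 0 <= p i <= 1 by move=> i; exact: hrange.
set v := \sum_(i < n) b i.
pose fo i := pmfA p (~: [set i]).
have rem : forall i m, f m = p i * predF (fo i) m + (1 - p i) * fo i m.
  move=> i m; rewrite /f bern_pmfE (@pmfA_rem R n p setT i m) ?inE //.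
  by rewrite /fo -setTD.
pose g m := \sum_(i < n) b i * p i * predF (fo i) m.
pose h m := \sum_(i < n) b i * (1 - p i) * fo i m.
have alphaE : forall m, alpha m = g m / (v * f m).
  move=> m; rewrite /alpha /so_alpha /g; congr (_ / _).
  apply: eq_bigr => i _; congr (_ * _).
  by case: m => [|m] //=; rewrite bern_pmf_omitE.
have vf : forall m, v * f m = g m + h m.
  move=> m; rewrite /v mulr_suml -big_split; apply: eq_bigr => i _ /=.
  rewrite (rem i m); ring.
have fpos : forall m, (m <= n)%N -> f m != 0 by move=> m hm; rewrite gt_eqF // hf.
have v0 : v != 0 by rewrite gt_eqF.
have f0 := fpos k (ltnW (ltnW hk)).
have f1 := fpos k.+1 (ltnW hk).
have f2 := fpos k.+2 hk.
have -> : alpha k.+1 * (1 - alpha k.+1) * f k.+1 ^+ 2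
         - alpha k.+2 * (1 - alpha k) * f k * f k.+2 =
         (g k.+1 * (v * f k.+1 - g k.+1) - g k.+2 * (v * f k - g k)) / (v ^+ 2).
  rewrite !alphaE; field.
  by rewrite v0 f0 f1 f2.
apply: divr_ge0; last by rewrite sqr_ge0.
have hE : forall m, v * f m - g m = h m by move=> m; rewrite vf addrC addKr.
rewrite !hE.
pose G m := \sum_(i < n) b i * p i * fo i m.
have -> : g k.+1 = G k by [].
have -> : g k.+2 = G k.+1 by [].
pose T i j := (b i * p i * fo i k) * (b j * (1 - p j) * fo j k.+1)
            - (b i * p i * fo i k.+1) * (b j * (1 - p j) * fo j k).
have -> : G k * h k.+1 - G k.+1 * h k = \sum_(i < n) \sum_(j < n) T i j.
  exact: dbl.
have hT : forall i j, 0 <= T i j + T j i.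
  move=> i j; case: (eqVneq i j) => [<-|ne].
    suff -> : T i i + T i i = 0 by [].
    rewrite /T; ring.
  pose F := pmfA p (~: [set i] :\ j).
  have ei : forall m, fo i m = p j * predF F m + (1 - p j) * F m.
    move=> m; apply: pmfA_rem; by rewrite !inE eq_sym.
  have ej : forall m, fo j m = p i * predF F m + (1 - p i) * F m.
    move=> m; rewrite /fo (@pmfA_rem R n p _ i m) ?inE //.
    suff -> : ~: [set j] :\ i = ~: [set i] :\ j by [].
    apply/setP => x; rewrite !inE.
    by case: (x == i); case: (x == j).
  have ps : predF F k.+1 = F k by [].
  have -> : T i j + T j i =
     b i * b j * (p i - p j) ^+ 2 * (F k ^+ 2 - predF F k * F k.+1).
    rewrite /T !ei !ej ps; exact: alg_id.
  have [F0 L] := pmfA_LC hp (~: [set i] :\ j).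
  apply: mulr_ge0; first by apply: mulr_ge0; [apply: mulr_ge0; exact: hder | exact: sqr_ge0].
  rewrite subr_ge0; move: (k) => m; case: m => [|m] /=.
    by rewrite mul0r sqr_ge0.
  by rewrite expr2; exact: L.
have : 0 <= \sum_(i < n) \sum_(j < n) (T i j + T j i).
  by apply: sumr_ge0 => i _; apply: sumr_ge0 => j _.
rewrite (eq_bigr (fun i => \sum_(j < n) T i j + \sum_(j < n) T j i)); last first.
  by move=> i _; rewrite big_split.
rewrite big_split /= [X in _ + X]exchange_big /=.
lra.
Qed.
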